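(* Let $d\geq 1$. There exist $e_1,e_2,e_3,e_4\in\mathbb{F}_{2^d}$ such that $t^5+t^4+e_1t^3+e_2t^2+e_3t+e_4$ is irreducible over $\mathbb{F}_{2^d}$ and no three of its (distinct) roots in an algebraic closure sum to $0$. *)

(* Defs.v *)
From HB Require Import structures.
From mathcomp Require Import all_boot all_order all_algebra all_field.
Set Implicit Arguments. Unset Strict Implicit. Unset Printing Implicit Defensive.
Import GRing.Theory.
Local Open Scope ring_scope.

Definition quintic (F : nzRingType) (e1 e2 e3 e4 : F) : {poly F} :=
  'X^5 + 'X^4 + e1%:P * 'X^3 + e2%:P * 'X^2 + e3%:P * 'X + e4%:P.

(* Main.v *)
Require Import Defs.
From HB Require Import structures.
From mathcomp Require Import all_boot all_order all_algebra all_field.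
From mathcomp Require Import ring.
Set Implicit Arguments. Unset Strict Implicit. Unset Printing Implicit Defensive.
Import GRing.Theory.
Local Open Scope ring_scope.

Section Frob.
Variables (K : fieldType) (n : nat).
Hypothesis hK : (2 \in [pchar K])%N.
Definition frobn (x : K) := x ^+ (2 ^ n).

Lemma frobnD x y : frobn (x + y) = frobn x + frobn y.
Proof.
rewrite /frobn; elim: n => [|m IH]; first by rewrite !expr1.
rewrite expnSr !exprM IH -!(pFrobenius_autE hK).
by rewrite rmorphD.
Qed.

Lemma frobnN x : frobn (- x) = - frobn x.
Proof.
by apply/eqP; rewrite -subr_eq0 opprK -frobnD addNr /frobn expr0n expn_eq0.
Qed.

Lemma frobn_is_zmod : zmod_morphism frobn.
Proof. by move=> x y; rewrite frobnD frobnN. Qed.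

Lemma frobn_is_monoid : monoid_morphism frobn.
Proof. by split=> [|x y]; rewrite /frobn ?expr1n ?exprMn. Qed.

HB.instance Definition _ := GRing.isZmodMorphism.Build K K frobn frobn_is_zmod.
HB.instance Definition _ := GRing.isMonoidMorphism.Build K K frobn frobn_is_monoid.

Definition frobr : {rmorphism K -> K} := frobn.
End Frob.

Section Conj.
Variables (F : finFieldType) (d : nat).
Hypothesis hF : #|F| = (2 ^ d)%N.
Variables (K : fieldType) (f : {rmorphism F -> K}).

Lemma char2F : (2 \in [pchar F])%N.
Proof. exact: card_finPcharP hF _. Qed.

Lemma char2K : (2 \in [pchar K])%N.
Proof. exact: rmorph_pchar char2F. Qed.

Local Notation g := (frobr d char2K).

Lemma gE w : g w = w ^+ (2 ^ d). Proof. by []. Qed.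

Lemma g_f c : g (f c) = f c.
Proof. by rewrite gE -hF -rmorphXn expf_card. Qed.

Lemma iter_gE k w : iter k g w = w ^+ (#|F| ^ k).
Proof.
elim: k => [|k IH]; first by rewrite expn0 expr1.
by rewrite iterS IH gE -hF expnSr exprM.
Qed.

Lemma root_g (P : {poly F}) w : root (map_poly f P) w -> root (map_poly f P) (g w).
Proof.
have E : map_poly g (map_poly f P) = map_poly f P.
  by rewrite -map_poly_comp; apply: eq_map_poly => c /=; rewrite g_f.
by move=> rw; rewrite -E rootE horner_map (eqP rw) rmorph0.
Qed.

Lemma root_iter (P : {poly F}) w k : root (map_poly f P) w -> root (map_poly f P) (iter k g w).
Proof. move=> H; elim: k => [|k IH]; first exact: H. rewrite iterS; exact: root_g. Qed.

Lemma iter_inj k : injective (iter k g).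
Proof. elim: k => [|k IH] x y //= E; apply: IH; exact: (fmorph_inj (frobr d char2K) E). Qed.

Lemma fix_g w : g w = w -> exists c, w = f c.
Proof.
move=> gw.
have: root (map_poly f ('X^#|F| - 'X)) w.
  by rewrite rmorphB /= map_polyXn map_polyX rootE !(hornerE, hornerXn) hF -gE gw subrr.
rewrite finField_genPoly rmorph_prod.
have -> : \prod_(i : F) map_poly f ('X - i%:P) = \prod_(z <- [seq f b | b : F]) ('X - z%:P).
  by rewrite big_image /=; apply: eq_bigr => b _; rewrite rmorphB /= map_polyX map_polyC.
by rewrite root_prod_XsubC => /mapP[c _ ->]; exists c.
Qed.

Lemma iter_mul k w m : iter k g w = w -> iter (m * k) g w = w.
Proof. by move=> H; elim: m => [|m IH]; [rewrite mul0n | rewrite mulSn iterD IH H]. Qed.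

Lemma period_aux w k m1 m2 : iter 5 g w = w -> iter k g w = w ->
  (m1 * k = m2 * 5 + 1)%N -> g w = w.
Proof.
move=> H5 Hk E; have := iter_mul m1 Hk; rewrite E addn1 /= (iter_mul m2 H5).
by [].
Qed.

Lemma period w k : iter 5 g w = w -> iter k g w = w -> (0 < k < 5)%N -> g w = w.
Proof.
move=> H5; case: k => [|[|[|[|[|k]]]]] // Hk _.
- apply: (period_aux (m1:=3) (m2:=1) H5 Hk); by [].
- apply: (period_aux (m1:=2) (m2:=1) H5 Hk); by [].
- apply: (period_aux (m1:=4) (m2:=3) H5 Hk); by [].
Qed.

Lemma noroot (P : {poly F}) c : irreducible_poly P -> size P = 6%N -> ~~ root P c.
Proof.
move=> [_ irr] sP; apply/negP; rewrite -dvdp_XsubCl => /irr.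
rewrite size_XsubC => /(_ isT) /eqp_size; rewrite sP size_XsubC.
by [].
Qed.

Definition conjs w := mkseq (fun i => iter i g w) 5.

Lemma conjs_uniq w : iter 5 g w = w -> g w != w -> uniq (conjs w).
Proof.
move=> w5 nofix; apply/mkseq_uniqP.
  move=> i j; rewrite !inE => Hi Hj E.
  wlog lij : i j Hi Hj E / (i <= j)%N.
    by move=> W; case: (leqP i j) => [|/ltnW] l; [|symmetry]; apply: W.
  have [k Ej] : exists k, j = (i + k)%N by exists (j - i)%N; rewrite subnKC.
  subst j; move: E; rewrite iterD => /iter_inj E.
  clear lij; case: k E Hj => [|k] E Hj; first by rewrite addn0.
  case/negP: nofix; apply/eqP; apply: (period w5 (esym E)).
  by rewrite /=; apply: leq_ltn_trans (leq_addl _ _) Hj.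
Qed.

Lemma roots_struct (P : {poly F}) w :
  P \is monic -> size P = 6%N -> irreducible_poly P ->
  P %| 'X^(#|F| ^ 5) - 'X -> root (map_poly f P) w ->
  map_poly f P = \prod_(z <- conjs w) ('X - z%:P).
Proof.
move=> mP sP iP dP rw.
have w5 : iter 5 g w = w.
  have : root (map_poly f ('X^(#|F| ^ 5) - 'X)) w.
    move: dP; rewrite -(dvdp_map f) => /dvdpP[r ->].
    by rewrite rootM rw orbT.
  rewrite rmorphB /= map_polyXn map_polyX rootE !(hornerE, hornerXn) subr_eq0.
  by move=> /eqP E; have := iter_gE 5 w; rewrite E.
have nofix : g w != w.
  apply/negP => /eqP /fix_g [c wc]; move: rw; rewrite wc rootE horner_map /=.
  rewrite fmorph_eq0 -rootE; apply/negP; exact: noroot.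
rewrite [LHS](all_roots_prod_XsubC (rs := conjs w)).
- by rewrite lead_coef_map (monicP mP) rmorph1 scale1r.
- by rewrite size_map_poly sP size_mkseq.
- by apply/allP => z /mapP[i _ ->]; apply: root_iter.
- by rewrite uniq_rootsE; apply: conjs_uniq.
Qed.

Lemma trace_root (P : {poly F}) w :
  P \is monic -> size P = 6%N -> irreducible_poly P ->
  P %| 'X^(#|F| ^ 5) - 'X -> root (map_poly f P) w ->
  f P`_4 = - \sum_(z <- conjs w) z.
Proof.
move=> mP sP iP dP rw.
rewrite -coef_map (roots_struct mP sP iP dP rw).
by rewrite -(coefPn_prod_XsubC (ps := conjs w)) ?size_mkseq.
Qed.


Definition tr w := \sum_(z <- conjs w) z.

Lemma trE w : tr w = w + g w + g (g w) + g (g (g w)) + g (g (g (g w))).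
Proof. by rewrite /tr /conjs /= !big_cons big_nil addr0 !addrA. Qed.

Lemma two0 (x : K) : x *+ 2 = 0.
Proof. by rewrite -mulr_natr (pcharf0 char2K) mulr0. Qed.

Lemma trD a b : tr (a + b) = tr a + tr b.
Proof. rewrite !trE !rmorphD; ring. Qed.

Lemma tr_fix c : g c = c -> tr c = c.
Proof.
move=> gc; rewrite trE !gc.
have -> : c + c + c + c + c = c + (c *+ 2) + (c *+ 2) by rewrite !mulr2n !addrA.
by rewrite two0 !addr0.
Qed.

Lemma g_tr w : iter 5 g w = w -> g (tr w) = tr w.
Proof. move=> w5; rewrite !trE !rmorphD; have -> : g (g (g (g (g w)))) = w := w5; ring. Qed.

Lemma iter_gD k a b : iter k g (a + b) = iter k g a + iter k g b.
Proof. elim: k => [|k IH]; first by []. by rewrite iterS IH rmorphD. Qed.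

Lemma iter_fix k c : g c = c -> iter k g c = c.
Proof. move=> gc; elim: k => [|k IH]; first by []. by rewrite iterS IH. Qed.

Lemma conjsE w : conjs w = [:: w; g w; g (g w); g (g (g w)); g (g (g (g w)))].
Proof. by []. Qed.

Lemma g_prod w : iter 5 g w = w ->
  map_poly g (\prod_(z <- conjs w) ('X - z%:P)) = \prod_(z <- conjs w) ('X - z%:P).
Proof.
move=> w5; rewrite rmorph_prod (eq_bigr (fun z => 'X - (g z)%:P)); last first.
  by move=> z _; exact: map_polyXsubC.
rewrite conjsE !big_cons big_nil !mulr1.
have -> : g (g (g (g (g w)))) = w := w5. rewrite big_nil mulr1. ring.
Qed.

End Conj.

Section Exist.
Variables (F : finFieldType) (d : nat).
Hypothesis hF : #|F| = (2 ^ d)%N.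

Lemma q_gt1 : (1 < #|F|)%N. Proof. exact: finNzRing_gt1. Qed.

Lemma d_gt0 : (0 < d)%N.
Proof. by have := q_gt1; rewrite hF; case: d. Qed.

Lemma exists_beta : exists (L : splittingFieldType F) (b : L),
  b ^+ (#|F| ^ 5) = b /\ b ^+ #|F| != b.
Proof.
set n := (#|F| ^ 5)%N.
have n1 : (1 < n)%N by rewrite /n (ltn_exp2l 0) // q_gt1.
set p : {poly F} := 'X^n - 'X.
have sX m : (1 < m)%N -> size ('X^m - 'X : {poly _}) = m.+1.
  move=> m1; rewrite size_polyDl size_polyXn // size_polyN size_polyX ltnS //.
have nz : p != 0 by rewrite -size_poly_eq0 sX.
case: (FinSplittingFieldFor nz) => L [rs Hrs _]; exists L.
have pLE : map_poly (in_alg L) p = 'X^n - 'X.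
  by rewrite rmorphB /= map_polyXn map_polyX.
rewrite pLE in Hrs.
have c2 : (2 \in [pchar L])%N := char2K hF (in_alg L).
have nR : (n%:R : L) = 0.
  by rewrite /n hF -expnM natrX (pcharf0 c2) expr0n muln_eq0 orbF eqn0Ngt d_gt0.
have sep : separable_poly ('X^n - 'X : {poly L}).
  rewrite unlock derivB derivXn derivX -scaler_nat nR scale0r sub0r.
  have -> : (-1 : {poly L}) = (-1) *: 1 by rewrite scaleN1r.
  by rewrite coprimepZr ?coprimep1 // oppr_eq0 oner_eq0.
have urs : uniq rs by rewrite -separable_prod_XsubC -(eqp_separable Hrs).
have srs : size rs = n.
  by have := eqp_size Hrs; rewrite size_prod_XsubC sX // => -[].
have rrs b : b \in rs -> b ^+ n = b.
  move=> brs; have : root (\prod_(z <- rs) ('X - z%:P)) b by rewrite root_prod_XsubC.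
  by rewrite -(eqp_root Hrs) rootE !(hornerE, hornerXn) subr_eq0 => /eqP.
case: (boolP (has (fun b => b ^+ #|F| != b) rs)) => [/hasP[b brs nb] | ].
  by exists b; split => //; apply: rrs.
rewrite has_predC negbK => /allP al.
have : (size rs < size (('X^#|F| - 'X)%R : {poly L}))%N.
  apply: max_poly_roots => //; first by rewrite -size_poly_eq0 sX ?q_gt1.
  by apply/allP => b /al /eqP bq; rewrite rootE !(hornerE, hornerXn) bq subrr.
rewrite srs sX ?q_gt1 // ltnS /n leqNgt => /negP[].
by rewrite -{1}(expn1 #|F|) ltn_exp2l ?q_gt1.
Qed.


Lemma exists_P : exists P : {poly F},
  [/\ P \is monic, size P = 6%N, irreducible_poly P,
      P %| 'X^(#|F| ^ 5) - 'X & P`_4 = 1].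
Proof.
have [L [b [b5 b1]]] := exists_beta.
pose f : {rmorphism F -> L} := in_alg L.
pose g := frobr d (char2K hF f).
have gE' x : g x = x ^+ #|F| by rewrite hF.
have b5' : iter 5 g b = b by rewrite (iter_gE hF f).
have b1' : g b != b by rewrite gE'.
pose t := tr hF f b.
have gt : g t = t := g_tr b5'.
pose a := b + 1 + t.
have ga : g a = g b + 1 + t by rewrite !rmorphD rmorph1 gt.
have a5 : iter 5 g a = a.
  by rewrite !iter_gD b5' (iter_fix _ gt) (iter_fix _ (rmorph1 g)).
have a1 : g a != a.
  rewrite ga /a; apply: contra b1' => /eqP; rewrite -!addrA => E.
  by apply/eqP; apply: (addIr (1 + t)).
have tra : tr hF f a = 1.
  rewrite !trD (tr_fix (rmorph1 g)) (tr_fix gt) -/t addrAC -mulr2n.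
  by rewrite (two0 hF f) add0r.
pose m := minPoly 1%AS a.
pose Pi := \prod_(z <- conjs hF f a) ('X - z%:P).
have Piover : Pi \is a polyOver 1%AS.
  apply/polyOverP => i; rewrite Fermat's_little_theorem dimv1 expn1 -gE'.
  have E := g_prod a5; have := congr1 (fun p : {poly L} => p`_i) E; by rewrite coef_map /= => ->.
have rootPi : root Pi a by rewrite root_prod_XsubC /conjs /= inE eqxx.
have mdv : m %| Pi := minPoly_dvdp Piover rootPi.
have Pinz : Pi != 0 by apply: monic_neq0; apply: monic_prod_XsubC.
have sPi : size Pi = 6%N by rewrite size_prod_XsubC /conjs size_mkseq.
have smle : (size m <= 6)%N by rewrite -sPi dvdp_leq.
have [P mP] : exists P, m = map_poly f P by apply/polyOver1P; apply: minPolyOver.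
have rootPa : root (map_poly f P) a by rewrite -mP root_minPoly.
have smge : (5 < size m)%N.
  have -> : 5%N = size (conjs hF f a) by rewrite /conjs size_mkseq.
  apply: max_poly_roots; first by apply: monic_neq0; apply: monic_minPoly.
    by rewrite mP; apply/allP => z /mapP[i _ ->]; apply: root_iter rootPa.
  exact: conjs_uniq a5 a1.
have sP : size P = 6%N.
  by apply/eqP; rewrite -(size_map_poly f) -mP eqn_leq smle smge.
have monP : P \is monic.
  by have := monic_minPoly 1%AS a; rewrite -/m mP !monicE lead_coef_map fmorph_eq1.
have irrP : irreducible_poly P.
  split; first by rewrite sP.
  move=> D sD dD.
  have hov : map_poly f D \is a polyOver 1%AS by apply/polyOver1P; exists D.
  have hd : map_poly f D %| m by rewrite mP dvdp_map.
  case/orP: (minPoly_irr hov hd); rewrite -/m ?mP ?eqp_map // => h.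
  by move: h; rewrite -(rmorph1 (map_poly f)) eqp_map => /eqp_size; rewrite size_poly1 => E; rewrite E in sD.
have dvP : P %| 'X^(#|F| ^ 5) - 'X.
  rewrite -(dvdp_map f) -mP; apply: minPoly_dvdp.
    by apply/polyOver1P; eexists.
  rewrite rmorphB /= map_polyXn map_polyX rootE !(hornerE, hornerXn).
  by have := iter_gE hF f 5 a; rewrite a5 => <-; rewrite subrr.
exists P; split => //.
have := trace_root hF monP sP irrP dvP rootPa.
rewrite -/(tr hF f a) tra -(rmorphN1 f) => /fmorph_inj ->.
apply/eqP; rewrite eq_sym -addr_eq0 -mulr2n.
exact/eqP/(pcharf0 (char2F hF)).
Qed.

End Exist.

Theorem proposition7p11 (d : nat) (F : finFieldType) :
  (1 <= d)%N -> #|F| = (2 ^ d)%N ->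
  exists e1 e2 e3 e4 : F,
    irreducible_poly (quintic e1 e2 e3 e4) /\
    forall (L : fieldType) (f : {rmorphism F -> L}) (x y z : L),
      x != y -> y != z -> x != z ->
      root (map_poly f (quintic e1 e2 e3 e4)) x ->
      root (map_poly f (quintic e1 e2 e3 e4)) y ->
      root (map_poly f (quintic e1 e2 e3 e4)) z ->
      x + y + z != 0.
Proof.
move=> d1 hF; have [P [mP sP iP dP c4]] := exists_P hF.
have PE : P = quintic P`_3 P`_2 P`_1 P`_0.
  have l5 : P`_5 = 1 by have := monicP mP; rewrite lead_coefE sP.
  apply/polyP => i; rewrite /quintic !coefD !coefCM !coefXn coefX coefC.
  case: i => [|[|[|[|[|[|i]]]]]] /=; rewrite ?mulr0 ?mulr1 ?addr0 ?add0r //.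
  by rewrite nth_default // sP.
exists P`_3, P`_2, P`_1, P`_0; rewrite -PE; split => //.
move=> L f x y z _ _ _ rx ry rz.
have trv w : root (map_poly f P) w -> tr hF f w = -1.
  move=> rw; have := trace_root hF mP sP iP dP rw.
  by rewrite c4 rmorph1 -/(tr hF f w) => ->; rewrite opprK.
apply/eqP => s0; have := congr1 (tr hF f) s0.
rewrite !trD (trv _ rx) (trv _ ry) (trv _ rz) (tr_fix (rmorph0 _)).
rewrite -mulr2n (two0 hF f) add0r => /eqP; rewrite oppr_eq0 oner_eq0.
by [].
Qed.
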